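(* Let $\Delta\in\mathbb F^{m\times m}$ be a connection matrix with column/row partition $J_0,\dots,J_b$. Let $\Delta^m$ be the last matrix produced by the Incremental Sweeping Algorithm (ISA) applied to $\Delta$, and let $\Delta(1)^m,\dots,\Delta(b)^m$ be the matrices produced by the Block Sequential Sweeping Algorithm applied to $\Delta$. Then $\Delta^m_{J_{k-1}J_k}=\Delta(k)^m_{J_{k-1}J_k}$ for $k=1,\dots,b$. Moreover, for each iteration $r$, the set of positions marked as primary pivots (resp. change-of-basis pivots) at iteration $r$ in the ISA run on $\Delta$ equals the union over $k=1,\dots,b$ of the sets of positions marked as primary pivots (resp. change-of-basis pivots) at iteration $r$ in the ISA runs on $\Delta(k)$.
   Context: Throughout, $\mathbb F$ is a field and $m\ge1$. $A_{IJ}$ is the submatrix of $A$ with rows in $I$, columns in $J$. $U^{pq}$ is the $m\times m$ matrix whose only nonzero entry is a $1$ in position $(p,q)$. Superscripts on matrices are indices, not powers. A connection matrix (over $\mathbb F$) is a matrix $\Delta\in\mathbb F^{m\times m}$ together with a partition $\{1,\dots,m\}=J_0\sqcup\cdots\sqcup J_b$ (the column/row partition; the $J_k$ need not consist of consecutive integers) such that $\Delta$ is upper triangular, $\Delta\Delta=0$, and $\Delta_{ij}=0$ unless $i<j$ and $(i,j)\in\bigcup_{k=1}^bJ_{k-1}\times J_k$. For $1\le r\le m-1$ the $r$-th diagonal is $\{(j-r,j):r<j\le m\}$. Incremental Sweeping Algorithm (ISA) applied to a connection matrix $\Delta$: set $\Delta^0=\Delta^1=\Delta$. For $r=1,\dots,m-1$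 in turn: (Markup) for every position $(j-r,j)$ on the $r$-th diagonal with $\Delta^r_{j-r,j}\ne0$ such that no position in column $j$ was marked as a primary pivot at an earlier iteration: if some position $(j-r,p)$ of row $j-r$ was marked as a primary pivot at an earlier iteration, mark $(j-r,j)$ as a change-of-basis pivot of iteration $r$; otherwise mark $(j-r,j)$ permanently as a primary pivot (marked at iteration $r$). (Update) Let $T^r=I-\sum \frac{\Delta^r_{j-r,j}}{\Delta^r_{j-r,p}}U^{pj}$, the sum running over all change-of-basis pivots $(j-r,j)$ of iteration $r$, where $(j-r,p)$ is the primary pivot position in row $j-r$; set $\Delta^{r+1}=(T^r)^{-1}\Delta^rT^r$. Block Sequential Sweeping Algorithm applied to $\Delta$: set $\mathcal J_0=\emptyset$. For $k=1,\dots,b$ in turn: let $\Delta(k)$ be the matrix that agrees with $\Delta$ at the positions in $(J_{k-1}\setminus\mathcal J_{k-1})\times J_k$ and is zero elsewhere (a connection matrix with the same partition); apply ISA to $\Delta(k)$, obtaining $\Delta(k)^0,\dots,\Delta(k)^m$; let $\mathcal J_k$ be the set of indices of columns containing primary pivot positions in this run. *)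

(* Defs.v *)
From HB Require Import structures.
From mathcomp Require Import all_boot all_order all_algebra.
Set Implicit Arguments. Unset Strict Implicit. Unset Printing Implicit Defensive.
Import Order.TTheory GRing.Theory Num.Theory.
Local Open Scope ring_scope.

Section ISA.
Variables (F : fieldType) (m : nat).

(* Indices 1..m of the paper are represented by 'I_m (0..m-1); positions are
   pairs (row, column).  The partition J_0,...,J_b is given by a block map
   blk : 'I_m -> nat, with J_k = [set i | blk i == k]. *)

Definition pos := ('I_m * 'I_m)%type.

Definition connection_matrix (b : nat) (blk : 'I_m -> nat) (D : 'M[F]_m) : Prop :=
  [/\ forall i, (blk i <= b)%N,
      forall i j : 'I_m, (j < i)%N -> D i j = 0,
      D *m D = 0 &
      forall i j : 'I_m, D i j != 0 -> (i < j)%N /\ blk j = (blk i).+1 ].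

Definition on_diag (r : nat) (ij : pos) : bool := (val ij.2 == val ij.1 + r)%N.

Record isa_state := IsaState { st_mat : 'M[F]_m ; st_prims : {set pos} }.

Definition col_has_prim (P : {set pos}) (j : 'I_m) : bool :=
  [exists i : 'I_m, (i, j) \in P].
Definition row_has_prim (P : {set pos}) (i : 'I_m) : bool :=
  [exists j : 'I_m, (i, j) \in P].

(* Markup of iteration r, performed on state s (whose matrix is Delta^r and
   whose primary set contains the primary pivots of iterations < r). *)
Definition markP (r : nat) (s : isa_state) : {set pos} :=
  [set ij : pos | [&& on_diag r ij, st_mat s ij.1 ij.2 != 0,
                     ~~ col_has_prim (st_prims s) ij.2 &
                     ~~ row_has_prim (st_prims s) ij.1]].
Definition markC (r : nat) (s : isa_state) : {set pos} :=
  [set ij : pos | [&& on_diag r ij, st_mat s ij.1 ij.2 != 0,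
                     ~~ col_has_prim (st_prims s) ij.2 &
                     row_has_prim (st_prims s) ij.1]].

Definition prim_col (P : {set pos}) (i : 'I_m) (dflt : 'I_m) : 'I_m :=
  odflt dflt [pick q : 'I_m | (i, q) \in P].

Definition U (p q : 'I_m) : 'M[F]_m := delta_mx p q.

Definition Tmat (r : nat) (s : isa_state) : 'M[F]_m :=
  1%:M - \sum_(ij in markC r s)
           (st_mat s ij.1 ij.2 / st_mat s ij.1 (prim_col (st_prims s) ij.1 ij.2))
             *: U (prim_col (st_prims s) ij.1 ij.2) ij.2.

Definition isa_step (r : nat) (s : isa_state) : isa_state :=
  IsaState (invmx (Tmat r s) *m st_mat s *m Tmat r s) (st_prims s :|: markP r s).

(* isa_run D r = state after iterations 1..r; its matrix is Delta^{r+1}. *)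
Fixpoint isa_run (D : 'M[F]_m) (r : nat) : isa_state :=
  match r with
  | 0 => IsaState D set0
  | r'.+1 => isa_step r'.+1 (isa_run D r')
  end.

(* Delta^r for r >= 1 (Delta^0 = Delta^1 = Delta) *)
Definition isa_mat (D : 'M[F]_m) (r : nat) : 'M[F]_m := st_mat (isa_run D r.-1).

Definition isa_prim_at (D : 'M[F]_m) (r : nat) : {set pos} := markP r (isa_run D r.-1).
Definition isa_cob_at (D : 'M[F]_m) (r : nat) : {set pos} := markC r (isa_run D r.-1).

Definition isa_all_prims (D : 'M[F]_m) : {set pos} := st_prims (isa_run D m.-1).

Definition prim_cols (D : 'M[F]_m) : {set 'I_m} :=
  [set j : 'I_m | col_has_prim (isa_all_prims D) j].

Definition Dblock (blk : 'I_m -> nat) (D : 'M[F]_m) (k : nat) (Jprev : {set 'I_m})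
  : 'M[F]_m :=
  \matrix_(i, j) (if [&& blk i == k.-1, i \notin Jprev & blk j == k]%N
                  then D i j else 0).

Fixpoint bssa_J (blk : 'I_m -> nat) (D : 'M[F]_m) (k : nat) : {set 'I_m} :=
  match k with
  | 0 => set0
  | k'.+1 => prim_cols (Dblock blk D k'.+1 (bssa_J blk D k'))
  end.

Definition bssa_D (blk : 'I_m -> nat) (D : 'M[F]_m) (k : nat) : 'M[F]_m :=
  Dblock blk D k (bssa_J blk D k.-1).

End ISA.

(* Main.v *)
Require Import Defs.
From HB Require Import structures.
From mathcomp Require Import all_boot all_order all_algebra.
From mathcomp Require Import zify.
Set Implicit Arguments. Unset Strict Implicit. Unset Printing Implicit Defensive.
Import Order.TTheory GRing.Theory Num.Theory.
Local Open Scope ring_scope.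

Section Gen.
Variables (F : fieldType) (m : nat).
Implicit Types (s : isa_state F m) (P : {set pos m}).

Definition qc P (i d : 'I_m) := prim_col P i d.
Definition cf s (ij : pos m) : F :=
  st_mat s ij.1 ij.2 / st_mat s ij.1 (prim_col (st_prims s) ij.1 ij.2).
Definition Nmat r s : 'M[F]_m :=
  \sum_(ij in markC r s) cf s ij *: U F (prim_col (st_prims s) ij.1 ij.2) ij.2.

Lemma Tmat_eq r s : Tmat r s = 1%:M - Nmat r s.
Proof. by []. Qed.

Lemma markCP r s i j : ((i,j) \in markC r s) =
  [&& on_diag r (i,j), st_mat s i j != 0, ~~ col_has_prim (st_prims s) j &
      row_has_prim (st_prims s) i].
Proof. by rewrite inE. Qed.

Lemma markPP r s i j : ((i,j) \in markP r s) =
  [&& on_diag r (i,j), st_mat s i j != 0, ~~ col_has_prim (st_prims s) j &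
      ~~ row_has_prim (st_prims s) i].
Proof. by rewrite inE. Qed.

Lemma prim_col_in P i d : row_has_prim P i -> (i, prim_col P i d) \in P.
Proof.
move=> /existsP [q Hq]; rewrite /prim_col.
by case: pickP => [q' //|/(_ q)]; rewrite Hq.
Qed.

Lemma Nmat_entry r s l b : Nmat r s l b =
  \sum_(ij in markC r s) cf s ij *
     ((l == prim_col (st_prims s) ij.1 ij.2) && (b == ij.2))%:R.
Proof.
rewrite /Nmat summxE; apply: eq_bigr => ij _.
by rewrite mxE /U mxE.
Qed.

Lemma on_diag_col r (x y : pos m) : on_diag r x -> on_diag r y -> x.2 = y.2 -> x = y.
Proof.
case: x => x1 x2; case: y => y1 y2 /=; rewrite /on_diag /= => /eqP h1 /eqP h2 e.
subst y2; have : val x1 = val y1 by apply/eqP; rewrite -(eqn_add2r r) -h1 -h2.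
by move=> /val_inj ->.
Qed.

Lemma Nmat_col r s a b l : (a, b) \in markC r s ->
  Nmat r s l b = if l == prim_col (st_prims s) a b then cf s (a, b) else 0.
Proof.
move=> H; rewrite Nmat_entry (bigD1 (a,b)) //= eqxx andbT big1 ?addr0.
  by case: eqP => _; rewrite ?mulr1 ?mulr0.
move=> [x y] /andP [Hx Hne]; case: (eqVneq b y) => [e|]; last by rewrite andbF mulr0.
exfalso; move: Hne; rewrite (@on_diag_col r (x, y) (a, b)) ?eqxx //=.
- by move: Hx; rewrite markCP => /and4P[].
- by move: H; rewrite markCP => /and4P[].
Qed.

Lemma Nmat_nz r s l b : Nmat r s l b != 0 ->
  exists a, (a, b) \in markC r s /\ l = prim_col (st_prims s) a b.
Proof.
rewrite Nmat_entry => H.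
have : [exists ij in markC r s,
    cf s ij * ((l == prim_col (st_prims s) ij.1 ij.2) && (b == ij.2))%:R != 0].
  apply: contraNT H => /exists_inPn H'.
  by apply/eqP; apply: big1 => ij Hij; apply/eqP; move: (H' ij Hij); rewrite negbK.
move=> /exists_inP [[x y] Hx Hne].
move: Hne => /=; case: (eqVneq l (prim_col (st_prims s) x y)) => [->|_];
  case: (eqVneq b y) => [->|_]; rewrite ?andbF ?mulr0 ?eqxx //.
by move=> _; exists x.
Qed.


Lemma markC_rowprim r s i j : (i, j) \in markC r s ->
  (i, prim_col (st_prims s) i j) \in st_prims s.
Proof. by rewrite markCP => /and4P [_ _ _ h]; apply: prim_col_in. Qed.

Lemma NN0 r s : Nmat r s *m Nmat r s = 0.
Proof.
apply/matrixP => a b; rewrite !mxE; apply: big1 => l _.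
have [Hz|Hal] := eqVneq (Nmat r s a l) 0; first by rewrite Hz mul0r.
have [Hz|Hlb] := eqVneq (Nmat r s l b) 0; first by rewrite Hz mulr0.
exfalso; have [x [Hx _]] := Nmat_nz Hal; have [y [Hy El]] := Nmat_nz Hlb.
move: Hx; rewrite markCP => /and4P [_ _ /negP H _]; apply: H.
by apply/existsP; exists y; rewrite El; apply: markC_rowprim Hy.
Qed.

Lemma invT r s : invmx (Tmat r s) = 1%:M + Nmat r s.
Proof.
have H : Tmat r s *m (1%:M + Nmat r s) = 1%:M.
  by rewrite Tmat_eq mulmxDr mulmx1 mulmxBl mul1mx NN0 subr0 subrK.
have [HU _] := mulmx1_unit H.
by rewrite -[RHS](mulKmx HU) H mulmx1.
Qed.

Definition M1 r s := st_mat s *m Tmat r s.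

Lemma step_mat r s : st_mat (isa_step r s) = (1%:M + Nmat r s) *m M1 r s.
Proof. by rewrite /isa_step /= -invT /M1 mulmxA. Qed.

Lemma M1E r s a b : M1 r s a b =
  st_mat s a b - \sum_l st_mat s a l * Nmat r s l b.
Proof. by rewrite /M1 Tmat_eq mulmxBr mulmx1 !mxE. Qed.

Lemma stepE r s a b : st_mat (isa_step r s) a b =
  M1 r s a b + \sum_l Nmat r s a l * M1 r s l b.
Proof. by rewrite step_mat mulmxDl mul1mx !mxE. Qed.

End Gen.

Lemma sum_nz (R : nmodType) (I : finType) (f : I -> R) :
  \sum_i f i != 0 -> exists i, f i != 0.
Proof.
move=> H; have : [exists i, f i != 0].
  by apply: contraNT H => /existsPn H'; apply/eqP/big1 => i _; apply/eqP; move: (H' i); rewrite negbK.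
by move=> /existsP.
Qed.

Lemma mul_nz (R : idomainType) (x y : R) : x * y != 0 -> x != 0 /\ y != 0.
Proof. by rewrite mulf_eq0 negb_or => /andP. Qed.

Lemma sub_nz (R : zmodType) (x y : R) : x - y != 0 -> x != 0 \/ y != 0.
Proof.
case: (eqVneq x 0) => [->|]; last by left.
case: (eqVneq y 0) => [->|]; last by right.
by rewrite subr0 eqxx.
Qed.

Lemma add_nz (R : zmodType) (x y : R) : x + y != 0 -> x != 0 \/ y != 0.
Proof.
case: (eqVneq x 0) => [->|]; last by left.
case: (eqVneq y 0) => [->|]; last by right.
by rewrite addr0 eqxx.
Qed.

Section Inv.
Variables (F : fieldType) (m : nat) (blk : 'I_m -> nat).

Record Inv (s : isa_state F m) (n : nat) : Prop := {
  inv_blk : forall a b : 'I_m, st_mat s a b != 0 -> (a < b)%N /\ blk b = (blk a).+1;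
  inv_sq : st_mat s *m st_mat s = 0;
  inv_piv : forall i p : 'I_m, (i, p) \in st_prims s -> st_mat s i p != 0 /\ (p <= i + n)%N;
  inv_cu : forall i1 i2 p : 'I_m, (i1, p) \in st_prims s -> (i2, p) \in st_prims s -> i1 = i2;
  inv_ru : forall i p1 p2 : 'I_m, (i, p1) \in st_prims s -> (i, p2) \in st_prims s -> p1 = p2;
  inv_low : forall a b : 'I_m, (b <= a + n)%N -> st_mat s a b != 0 ->
     exists i1 : 'I_m, (a <= i1)%N /\ (i1, b) \in st_prims s
}.

Section Step.
Variables (s : isa_state F m) (n : nat).
Hypothesis H : Inv s n.
Let M := st_mat s.
Let P := st_prims s.
Let r := n.+1.
Let C := markC r s.
Let Pn := markP r s.

Lemma C_facts i b : (i, b) \in C ->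
  [/\ nat_of_ord b = (nat_of_ord i + r)%N, M i b != 0, ~~ col_has_prim P b &
      (i, prim_col P i b) \in P].
Proof.
move=> Hc; have Hq := markC_rowprim Hc.
by move: Hc; rewrite markCP => /and4P [/eqP d nz nc _].
Qed.

Lemma Pn_facts i b : (i, b) \in Pn ->
  [/\ nat_of_ord b = (nat_of_ord i + r)%N, M i b != 0, ~~ col_has_prim P b &
      ~~ row_has_prim P i].
Proof. by rewrite /Pn markPP => /and4P [/eqP d nz nc nr]. Qed.

Lemma P_facts i p : (i, p) \in P ->
  [/\ M i p != 0, (i < p)%N, (p <= i + n)%N & blk p = (blk i).+1].
Proof.
move=> Hp; have [nz le] := inv_piv H Hp.
by have [lt bk] := inv_blk H nz.
Qed.

Lemma N_nz l b : Nmat r s l b != 0 ->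
  exists i, [/\ (i, b) \in C, l = prim_col P i b, nat_of_ord b = (nat_of_ord i + r)%N,
    (i, l) \in P & ~~ col_has_prim P b].
Proof.
move=> /Nmat_nz [i [Hc El]]; exists i; have [d _ nc q] := C_facts Hc.
by split => //; rewrite El.
Qed.

End Step.
End Inv.
Section Step2.
Variables (F : fieldType) (m : nat) (blk : 'I_m -> nat).
Variables (s : isa_state F m) (n : nat).
Hypothesis H : Inv blk s n.
Let M := st_mat s.
Let P := st_prims s.
Let r := n.+1.
Let C := markC r s.
Let Pn := markP r s.

Lemma M1_blk a b : M1 r s a b != 0 -> (a < b)%N /\ blk b = (blk a).+1.
Proof.
rewrite M1E => /sub_nz [Hm|/sum_nz [l /mul_nz [Hal Hlb]]].
  exact: (inv_blk H Hm).
have [i [Hc El d Hil nc]] := N_nz Hlb.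
have [_ lt le bk] := P_facts H Hil.
have [lt' bk'] := inv_blk H Hal.
have [_ nzib _ _] := C_facts Hc.
have [ltib bkib] := inv_blk H nzib.
split; last by rewrite bkib -bk bk'.
rewrite /r in d; lia.
Qed.


Lemma step_blk (a b : 'I_m) : st_mat (isa_step r s) a b != 0 -> (a < b)%N /\ blk b = (blk a).+1.
Proof.
rewrite stepE => /add_nz [Hm|/sum_nz [l /mul_nz [Hal Hlb]]]; first exact: M1_blk.
have [i [Hc El d Hil nc]] := N_nz Hal.
have [_ lt le bk] := P_facts H Hil.
have [_ nzib _ _] := C_facts Hc.
have [ltib bkib] := inv_blk H nzib.
have [lt' bk'] := M1_blk Hlb.
split; last by rewrite bk' bkib -bk.
rewrite /r in d; lia.
Qed.

Lemma noC_col (p : 'I_m) : (col_has_prim P p \/ exists x, (x, p) \in Pn) ->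
  forall l, Nmat r s l p = 0.
Proof.
move=> Hp l; apply/eqP; apply: contraT => /N_nz [i [Hc _ _ _ nc]].
case: Hp => [cp|[x Hx]]; first by rewrite cp in nc.
have [d1 _ _ nr] := Pn_facts Hx.
have [d2 _ _ _] := C_facts Hc.
have e : x = i by apply: val_inj => /=; rewrite /r in d1 d2; lia.
subst x; move: Hc; rewrite markCP => /and4P [_ _ _ hr].
by rewrite hr in nr.
Qed.

Lemma M1_noC (p : 'I_m) : (col_has_prim P p \/ exists x, (x, p) \in Pn) ->
  forall l, M1 r s l p = M l p.
Proof.
move=> Hp l; rewrite M1E big1 ?subr0 // => l' _.
by rewrite (noC_col Hp) mulr0.
Qed.

Lemma piv_pres (i p : 'I_m) : (i, p) \in P \/ (i, p) \in Pn ->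
  st_mat (isa_step r s) i p = M i p.
Proof.
move=> Hip.
have Hp : col_has_prim P p \/ exists x, (x, p) \in Pn.
  case: Hip => [h|h]; [left; apply/existsP; exists i | right; exists i]; done.
rewrite stepE M1_noC // big1 ?addr0 // => l _.
rewrite M1_noC //; apply/eqP; apply: contraT => /mul_nz [Hil Hlp].
have [i' [Hc El d Hi'i nc]] := N_nz Hil.
have [_ lt le bk] := P_facts H Hi'i.
have [i1 [le1 Hi1]] : exists i1 : 'I_m, (l <= i1)%N /\ (i1, p) \in P.
  apply: (inv_low H) Hlp; case: Hip => [h|h].
    have [_ _ le2 _] := P_facts H h; rewrite /r in d; lia.
  have [d2 _ _ _] := Pn_facts h; rewrite /r in d d2; lia.
case: Hip => [h|h].
  have e := inv_cu H h Hi1; subst i1; rewrite /r in d; lia.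
have [_ _ nc2 _] := Pn_facts h.
by move: nc2; rewrite /col_has_prim; case/existsP; exists i1.
Qed.

Lemma M1_zero (a b : 'I_m) : (b <= a + r)%N ->
  (forall i1 : 'I_m, (a <= i1)%N -> (i1, b) \notin P /\ (i1, b) \notin Pn) ->
  M1 r s a b = 0.
Proof.
move=> Hb Hn.
have ncol : (b <= a + n)%N \/ ~~ col_has_prim P b.
  case: (leqP b (a + n)) => hb; [by left | right].
  apply/existsP => -[i1 Hi1].
  have [_ _ le _] := P_facts H Hi1.
  case: (leqP a i1) => hai; first by have [] := Hn i1 hai; rewrite Hi1.
  rewrite /r in Hb; lia.
case: (boolP ((a, b) \in C)) => Hab.
  have [_ _ _ Hq] := C_facts Hab.
  have [nzq _ _ _] := P_facts H Hq.
  rewrite M1E (bigD1 (prim_col P a b)) //= big1 ?addr0.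
    rewrite (Nmat_col _ Hab) eqxx /cf /=.
    by rewrite mulrC divfK // subrr.
  move=> l /negPf hl; by rewrite (Nmat_col _ Hab) hl mulr0.
have Mab : M a b = 0.
  apply/eqP; apply: contraT => nz.
  case: ncol => [hb|nc].
    have [i1 [le1 Hi1]] := inv_low H hb nz.
    by have [] := Hn i1 le1; rewrite Hi1.
  case: (leqP b (a + n)) => hb.
    have [i1 [le1 Hi1]] := inv_low H hb nz.
    by have [] := Hn i1 le1; rewrite Hi1.
  have dg : on_diag r (a, b) by rewrite /on_diag /=; apply/eqP; rewrite /r in Hb *; lia.
  case: (boolP (row_has_prim P a)) => hr.
    by move: Hab; rewrite /C markCP dg nz nc hr.
  have [] := Hn a (leqnn _).
  by rewrite /Pn markPP dg nz nc hr.
rewrite M1E Mab sub0r big1 ?oppr0 // => l _.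
apply/eqP; apply: contraT => /mul_nz [Hal Hlb].
have [i [Hc El d Hil nc]] := N_nz Hlb.
have [_ lt le bk] := P_facts H Hil.
have ia : (i < a)%N.
  case: (ltngtP i a) => [//|hai|e]; first by rewrite /r in Hb d; lia.
  have ea : a = i by apply: val_inj.
  by move: Hab; rewrite ea Hc.
have [i1 [le1 Hi1]] : exists i1 : 'I_m, (a <= i1)%N /\ (i1, l) \in P.
  by apply: (inv_low H) Hal; lia.
have e := inv_cu H Hil Hi1; subst i1; lia.
Qed.

Lemma step_low (a b : 'I_m) : (b <= a + r)%N -> st_mat (isa_step r s) a b != 0 ->
  exists i1 : 'I_m, (a <= i1)%N /\ (i1, b) \in st_prims (isa_step r s).
Proof.
move=> Hb nz.
case: (boolP [exists i1 : 'I_m, (a <= i1)%N && ((i1, b) \in P :|: Pn)]).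
  by move=> /existsP [i1 /andP [h1 h2]]; exists i1.
move=> /existsPn Hn'.
have Hn : forall i1 : 'I_m, (a <= i1)%N -> (i1, b) \notin P /\ (i1, b) \notin Pn.
  move=> i1 h; move: (Hn' i1); rewrite h inE negb_or /= => /andP [] //.
move: nz; rewrite stepE M1_zero // add0r.
move=> /sum_nz [l /mul_nz [Hal Hlb]]; move: Hlb.
have [i' [Hc El d Hi'a nc]] := N_nz Hal.
have [_ lt le bk] := P_facts H Hi'a.
rewrite M1_zero ?eqxx //.
  by rewrite /r in d Hb *; lia.
move=> i1 h; apply: Hn; rewrite /r in d; lia.
Qed.

Lemma TinvT : Tmat r s *m invmx (Tmat r s) = 1%:M.
Proof.
by rewrite invT Tmat_eq mulmxDr mulmx1 mulmxBl mul1mx NN0 subr0 subrK.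
Qed.

Lemma Inv_step : Inv blk (isa_step r s) r.
Proof.
have prE : st_prims (isa_step r s) = P :|: Pn by [].
split.
- exact: step_blk.
- rewrite /isa_step /= !mulmxA -(mulmxA _ (Tmat r s) (invmx (Tmat r s))) TinvT.
  by rewrite mulmx1 -(mulmxA _ (st_mat s) (st_mat s)) (inv_sq H) mulmx0 mul0mx.
- move=> i p; rewrite prE inE => /orP [h|h].
    rewrite piv_pres; last by left.
    have [nz _ le _] := P_facts H h; split => //; rewrite /r; lia.
  rewrite piv_pres; last by right.
  have [d nz _ _] := Pn_facts h; split => //; by rewrite d /r leqnn.
- move=> i1 i2 p; rewrite prE !in_setU => /orP [h1|h1] /orP [h2|h2].
  + exact: (inv_cu H h1 h2).
  + have [_ _ nc _] := Pn_facts h2.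
    by move: nc; rewrite /col_has_prim; case/existsP; exists i1.
  + have [_ _ nc _] := Pn_facts h1.
    by move: nc; rewrite /col_has_prim; case/existsP; exists i2.
  + have [d1 _ _ _] := Pn_facts h1; have [d2 _ _ _] := Pn_facts h2.
    apply: val_inj => /=; rewrite /r in d1 d2; lia.
- move=> i p1 p2; rewrite prE !in_setU => /orP [h1|h1] /orP [h2|h2].
  + exact: (inv_ru H h1 h2).
  + have [_ _ _ nr] := Pn_facts h2.
    by move: nr; rewrite /row_has_prim; case/existsP; exists p1.
  + have [_ _ _ nr] := Pn_facts h1.
    by move: nr; rewrite /row_has_prim; case/existsP; exists p2.
  + have [d1 _ _ _] := Pn_facts h1; have [d2 _ _ _] := Pn_facts h2.
    apply: val_inj => /=; rewrite /r in d1 d2; lia.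
- exact: step_low.
Qed.
End Step2.

Section Run.
Variables (F : fieldType) (m : nat) (blk : 'I_m -> nat) (D : 'M[F]_m).
Hypothesis hD0 : Inv blk (IsaState D set0) 0.

Lemma Inv_run s : Inv blk (isa_run D s) s.
Proof. by elim: s => [|s IH] //=; apply: Inv_step. Qed.

Lemma prims_mono s s' : (s <= s')%N ->
  st_prims (isa_run D s) \subset st_prims (isa_run D s').
Proof.
move=> /subnK <-; elim: (s' - s)%N => [|k IH] //=.
by apply: subset_trans IH _; rewrite /isa_step /= subsetUl.
Qed.

Section Final.
Variable s : nat.
Hypothesis hs : forall a b : 'I_m, (b <= a + s)%N.
Let M := st_mat (isa_run D s).
Let P := st_prims (isa_run D s).

Lemma Xb i0 p j : (i0, p) \in P -> M p j = 0.
Proof.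
have HI := Inv_run s.
move: {2}(m - i0)%N (leqnn (m - i0)%N) => k; elim: k i0 p j => [|k IH] i0 p j.
  by have := ltn_ord i0; lia.
move=> hk Hp.
have sq : \sum_l M i0 l * M l j = 0.
  by have := inv_sq HI; move/matrixP => /(_ i0 j); rewrite !mxE.
move: sq; rewrite (bigD1 p) //= big1 ?addr0.
  have [nz _] := inv_piv HI Hp.
  by move/eqP; rewrite mulf_eq0 (negPf nz) /= => /eqP.
move=> l hl; apply/eqP; apply: contraT => /mul_nz [Hal Hlj].
have [i1 [le1 Hi1]] := inv_low HI (hs i0 l) Hal.
case: (ltngtP i0 i1) => [lt||e].
- by move: Hlj; rewrite (IH i1 l j) ?eqxx //; lia.
- lia.
- have e' : i0 = i1 by apply: val_inj.
  by move: hl; rewrite (inv_ru HI Hp (etrans (congr1 (fun x => (x, l) \in _) e') Hi1)) eqxx.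
Qed.

Lemma PR i : row_has_prim P i -> col_has_prim P i -> False.
Proof.
have HI := Inv_run s.
move=> /existsP [q Hq] /existsP [i0 Hi0].
have [nz _] := inv_piv HI Hq.
by move: nz; rewrite /M (Xb q Hi0) eqxx.
Qed.

End Final.
End Run.

Lemma in_bigcup_seq (T : finType) (sq : seq nat) (G : nat -> {set T}) x :
  (x \in \bigcup_(i <- sq) G i) = has (fun i => x \in G i) sq.
Proof.
elim: sq => [|i sq IH]; first by rewrite big_nil inE.
by rewrite big_cons in_setU IH.
Qed.

Lemma conn_Inv (F : fieldType) (m b : nat) (blk : 'I_m -> nat) (D : 'M[F]_m) :
  connection_matrix b blk D -> Inv blk (IsaState D set0) 0.
Proof.
case=> _ _ sq nzp; split => /=.
- by move=> a c h; have [] := nzp _ _ h.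
- exact: sq.
- by move=> i p; rewrite inE.
- by move=> i1 i2 p; rewrite inE.
- by move=> i1 i2 p; rewrite inE.
- move=> a c h nz; have [lt _] := nzp _ _ nz; lia.
Qed.

Section Sim.
Variables (F : fieldType) (m b : nat) (blk : 'I_m -> nat) (D : 'M[F]_m).
Hypothesis hD : connection_matrix b blk D.
Variables (k : nat) (J : {set 'I_m}).
Hypothesis hk : (1 <= k)%N.
Let Pfin := st_prims (isa_run D m.-1).
Hypothesis HJ : forall p, blk p = k.-1 -> (p \in J) = col_has_prim Pfin p.
Let Dk := Dblock blk D k J.
Let hD0 := conn_Inv hD.

Lemma hs_fin : forall a c : 'I_m, (c <= a + m.-1)%N.
Proof. by move=> a c; have := ltn_ord c; lia. Qed.

Record Sim (s : nat) : Prop := {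
  sim_a : forall x : pos m, (x \in st_prims (isa_run Dk s)) =
                            (x \in st_prims (isa_run D s)) && (blk x.2 == k);
  sim_b : forall i j : 'I_m, blk i = k.-1 -> i \notin J -> blk j = k ->
            st_mat (isa_run D s) i j = st_mat (isa_run Dk s) i j;
  sim_c : forall i j : 'I_m, st_mat (isa_run Dk s) i j != 0 ->
            [&& blk i == k.-1, i \notin J & blk j == k]
}.

Lemma Sim0 : Sim 0.
Proof.
split => /=.
- by move=> x; rewrite !inE.
- by move=> i j hi hJ hj; rewrite /Dk /Dblock mxE hi hj hJ !eqxx.
- by move=> i j; rewrite /Dk /Dblock mxE; case: ifP => //; rewrite eqxx.
Qed.

Lemma notJ (s : nat) (i : 'I_m) : (s <= m.-1)%N -> blk i = k.-1 ->
  row_has_prim (st_prims (isa_run D s)) i -> i \notin J.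
Proof.
move=> hsm hi /existsP [q hq]; rewrite HJ //; apply/negP => hc.
apply: (PR hD0 hs_fin (i := i)) hc; apply/existsP; exists q.
by apply: (subsetP (prims_mono D hsm)).
Qed.

Section SimStep.
Variable s : nat.
Hypothesis hsm : (s < m.-1)%N.
Hypothesis HS : Sim s.
Let A := isa_run D s.
Let B := isa_run Dk s.
Let r := s.+1.
Let HA := Inv_run hD0 s.

Lemma prim_blk (i q : 'I_m) : (i, q) \in st_prims A -> blk q = (blk i).+1.
Proof. by move=> h; have [nz _] := inv_piv HA h; have [] := inv_blk HA nz. Qed.

Lemma col_eq (j : 'I_m) : blk j = k ->
  col_has_prim (st_prims B) j = col_has_prim (st_prims A) j.
Proof.
move=> hj; apply/existsP/existsP => -[i hi]; exists i.
  by move: hi; rewrite (sim_a HS) => /andP [].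
by rewrite (sim_a HS) hi /= hj eqxx.
Qed.

Lemma row_eq (i : 'I_m) : blk i = k.-1 ->
  row_has_prim (st_prims B) i = row_has_prim (st_prims A) i.
Proof.
move=> hi; apply/existsP/existsP => -[q hq]; exists q.
  by move: hq; rewrite (sim_a HS) => /andP [].
by rewrite (sim_a HS) hq /= (prim_blk hq) hi; case: (k) hk.
Qed.

Lemma primcol_eq (i d : 'I_m) : blk i = k.-1 ->
  prim_col (st_prims B) i d = prim_col (st_prims A) i d.
Proof.
move=> hi; rewrite /prim_col; congr odflt; apply: eq_pick => q /=.
rewrite (sim_a HS) /=; case: (boolP ((i, q) \in st_prims A)) => //= hq.
by rewrite (prim_blk hq) hi prednK // eqxx.
Qed.

Lemma markP_eq (i j : 'I_m) : ((i, j) \in markP r B) = ((i, j) \in markP r A) && (blk j == k).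
Proof.
case: (boolP [&& blk i == k.-1, i \notin J & blk j == k]) => [/and3P [/eqP hi hJ /eqP hj]|hn].
  by rewrite !markPP (sim_b HS) // col_eq // row_eq // hj eqxx andbT.
rewrite [in LHS]markPP; apply/idP/idP.
  by move=> /and4P [_ nz _ _]; move: hn; rewrite (sim_c HS nz).
move=> /andP [hm /eqP hj]; exfalso.
move: (hm); rewrite markPP => /and4P [_ nz _ nr].
have [_ bk] := inv_blk HA nz.
have hi : blk i = k.-1 by rewrite -hj bk.
move: hn; rewrite hi hj !eqxx /= andbT negbK => hJ.
have : row_has_prim (st_prims (isa_run D r)) i.
  by apply/existsP; exists j; rewrite /= in_setU hm orbT.
by move/(notJ hsm hi); rewrite hJ.
Qed.

Lemma markC_eq (i j : 'I_m) : ((i, j) \in markC r B) = ((i, j) \in markC r A) && (blk j == k).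
Proof.
case: (boolP [&& blk i == k.-1, i \notin J & blk j == k]) => [/and3P [/eqP hi hJ /eqP hj]|hn].
  by rewrite !markCP (sim_b HS) // col_eq // row_eq // hj eqxx andbT.
rewrite [in LHS]markCP; apply/idP/idP.
  by move=> /and4P [_ nz _ _]; move: hn; rewrite (sim_c HS nz).
move=> /andP [hm /eqP hj]; exfalso.
move: (hm); rewrite markCP => /and4P [_ nz _ hr].
have [_ bk] := inv_blk HA nz.
have hi : blk i = k.-1 by rewrite -hj bk.
move: hn; rewrite hi hj !eqxx /= andbT negbK => hJ.
by move: hr; move/(notJ (ltnW hsm) hi); rewrite hJ.
Qed.

Lemma N_eq (l j : 'I_m) : blk j = k -> Nmat r B l j = Nmat r A l j.
Proof.
move=> hj; case: (boolP [exists x : 'I_m, (x, j) \in markC r A]).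
  move=> /existsP [x hx].
  have hxB : (x, j) \in markC r B by rewrite markC_eq hx hj eqxx.
  rewrite (Nmat_col _ hxB) (Nmat_col _ hx).
  move: (hx); rewrite markCP => /and4P [_ nz _ hr].
  have [_ bk] := inv_blk HA nz.
  have hx1 : blk x = k.-1 by rewrite -hj bk.
  have hxJ : x \notin J := notJ (ltnW hsm) hx1 hr.
  have hq := markC_rowprim hx.
  have hqb : blk (prim_col (st_prims A) x j) = k by rewrite (prim_blk hq) hx1 prednK.
  rewrite /cf /= !(primcol_eq j hx1).
  by rewrite -(sim_b HS) // -(sim_b HS).
move=> /existsPn hn.
have z : forall (S : isa_state F m), (forall x : 'I_m, (x, j) \notin markC r S) ->
    Nmat r S l j = 0.
  move=> S hS; apply/eqP; apply: contraT => /Nmat_nz [x [hx _]].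
  by move: (hS x); rewrite hx.
rewrite !z //.
by move=> x; rewrite markC_eq (negbTE (hn x)).
Qed.

Lemma M1B_supp (l c : 'I_m) : M1 r B l c != 0 -> [&& blk l == k.-1, l \notin J & blk c == k].
Proof.
rewrite M1E => /sub_nz [h|/sum_nz [l' /mul_nz [h1 h2]]]; first exact: (sim_c HS h).
have /and3P [-> -> _] := sim_c HS h1.
have [x [hx _]] := Nmat_nz h2.
move: hx; rewrite markCP => /and4P [_ nz _ _].
by have /and3P [_ _ ->] := sim_c HS nz.
Qed.

Lemma NM1B (a l c : 'I_m) : Nmat r B a l * M1 r B l c = 0.
Proof.
apply/eqP; apply: contraT => /mul_nz [h1 h2].
have [x [hx _]] := Nmat_nz h1.
move: hx; rewrite markCP => /and4P [_ nz _ _].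
have /and3P [_ _ /eqP e1] := sim_c HS nz.
have /and3P [/eqP e2 _ _] := M1B_supp h2.
move: e2; rewrite e1; lia.
Qed.

Lemma SimS : Sim s.+1.
Proof.
have EA : isa_run D s.+1 = isa_step r A by [].
have EB : isa_run Dk s.+1 = isa_step r B by [].
split.
- move=> [i j]; rewrite EA EB /= !in_setU (sim_a HS) markP_eq /=.
  by rewrite andb_orl.
- move=> i j hi hJ hj; rewrite EA EB !stepE.
  rewrite [X in _ = _ + X]big1; last by move=> l _; exact: NM1B.
  rewrite [X in _ + X = _]big1; last first.
    move=> l _; apply/eqP; apply: contraT => /mul_nz [h1 _].
    have [x [hx El]] := Nmat_nz h1.
    have hq := markC_rowprim hx; rewrite -El in hq.
    have : col_has_prim Pfin i.
      apply/existsP; exists x.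
      by apply: (subsetP (prims_mono D (ltnW hsm))).
    by rewrite -HJ // (negbTE hJ).
  rewrite !addr0 !M1E (sim_b HS) //; congr (_ - _); apply: eq_bigr => l _.
  rewrite (N_eq l hj).
  case: (eqVneq (Nmat r A l j) 0) => [->|nzN]; first by rewrite !mulr0.
  have [x [hx El]] := Nmat_nz nzN.
  have hq := markC_rowprim hx; rewrite -El in hq.
  move: (hx); rewrite markCP => /and4P [_ nz _ _].
  have [_ bk] := inv_blk HA nz.
  by rewrite (sim_b HS) // (prim_blk hq) -bk.
- move=> i j; rewrite EB stepE => /add_nz [h|/sum_nz [l h]].
    exact: M1B_supp.
  by rewrite NM1B eqxx in h.
Qed.
End SimStep.
End Sim.

Section SimFin.
Variables (F : fieldType) (m b : nat) (blk : 'I_m -> nat) (D : 'M[F]_m).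
Hypothesis hD : connection_matrix b blk D.
Variables (k : nat) (J : {set 'I_m}).
Hypothesis hk : (1 <= k)%N.
Let Pfin := st_prims (isa_run D m.-1).
Hypothesis HJ : forall p, blk p = k.-1 -> (p \in J) = col_has_prim Pfin p.
Let Dk := Dblock blk D k J.
Let hD0 := conn_Inv hD.

Lemma Sim_all s : (s <= m.-1)%N -> Sim blk D k J s.
Proof.
elim: s => [|s IH] hs; first exact: Sim0.
apply: (SimS hD hk HJ) => //; apply: IH; lia.
Qed.

Lemma fin_mat (i j : 'I_m) : blk i = k.-1 -> blk j = k ->
  st_mat (isa_run D m.-1) i j = st_mat (isa_run Dk m.-1) i j.
Proof.
move=> hi hj; have HS := Sim_all (leqnn m.-1).
case: (boolP (i \in J)) => hJ; last exact: (sim_b HS).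
have -> : st_mat (isa_run Dk m.-1) i j = 0.
  apply/eqP; apply: contraT => nz.
  by have /and3P [_ h _] := sim_c HS nz; rewrite hJ in h.
move: hJ; rewrite HJ // => /existsP [i0 h].
exact: (Xb hD0 (hs_fin hk) j h).
Qed.

Lemma fin_J (p : 'I_m) : blk p = k -> (p \in prim_cols Dk) = col_has_prim Pfin p.
Proof.
move=> hp; have HS := Sim_all (leqnn m.-1).
rewrite /prim_cols inE /isa_all_prims.
apply/existsP/existsP => -[i h]; exists i.
  by move: h; rewrite (sim_a HS) => /andP [].
by rewrite (sim_a HS) h /= hp eqxx.
Qed.

Lemma fin_markP r (x : pos m) : (1 <= r <= m.-1)%N ->
  (x \in markP r (isa_run Dk r.-1)) = (x \in markP r (isa_run D r.-1)) && (blk x.2 == k).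
Proof.
case: x => i j /andP [h1 h2].
have hs : (r.-1 < m.-1)%N by lia.
have HS := Sim_all (ltnW hs).
have := markP_eq hD hk HJ hs HS i j.
by rewrite prednK.
Qed.

Lemma fin_markC r (x : pos m) : (1 <= r <= m.-1)%N ->
  (x \in markC r (isa_run Dk r.-1)) = (x \in markC r (isa_run D r.-1)) && (blk x.2 == k).
Proof.
case: x => i j /andP [h1 h2].
have hs : (r.-1 < m.-1)%N by lia.
have HS := Sim_all (ltnW hs).
have := markC_eq hD hk HJ hs HS i j.
by rewrite prednK.
Qed.

End SimFin.

Unset Implicit Arguments.

Theorem mainTheorem6 (F : fieldType) (m : nat) (hm : (0 < m)%N)
  (b : nat) (blk : 'I_m -> nat) (D : 'M[F]_m)
  (hD : connection_matrix b blk D) :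
  (forall k : nat, (1 <= k <= b)%N ->
     forall i j : 'I_m, blk i = k.-1 -> blk j = k ->
       isa_mat D m i j = isa_mat (bssa_D blk D k) m i j)
  /\
  (forall r : nat, (1 <= r <= m.-1)%N ->
     isa_prim_at D r = \bigcup_(1 <= k < b.+1) isa_prim_at (bssa_D blk D k) r
     /\ isa_cob_at D r = \bigcup_(1 <= k < b.+1) isa_cob_at (bssa_D blk D k) r).
Proof.
have hD0 := conn_Inv hD.
have HJall : forall k, (1 <= k)%N -> forall p, blk p = k.-1 ->
    (p \in bssa_J blk D k.-1) = col_has_prim (st_prims (isa_run D m.-1)) p.
  elim=> [//|k IH] _ p hp.
  case: k IH hp => [|k] IH hp /=.
    rewrite inE; apply/esym/negbTE/negP => /existsP [i0 h].
    have [nz _] := inv_piv (Inv_run hD0 m.-1) h.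
    have [_ bk] := inv_blk (Inv_run hD0 m.-1) nz.
    by rewrite hp in bk.
  exact: (fin_J hD (ltn0Sn k) (IH (ltn0Sn k)) hp).
have hb : forall x : pos m, forall r, x \in markP r (isa_run D r.-1) \/ x \in markC r (isa_run D r.-1) ->
    (1 <= blk x.2 <= b)%N.
  move=> [i j] r hx.
  have nz : st_mat (isa_run D r.-1) i j != 0.
    by case: hx; [rewrite markPP|rewrite markCP] => /and4P [].
  have [_ bk] := inv_blk (Inv_run hD0 r.-1) nz.
  case: hD => hbd _ _ _; apply/andP; split; [by rewrite /= bk | exact: hbd].
split.
  move=> k /andP [hk _] i j hi hj.
  exact: (fin_mat hD hk (HJall k hk) hi hj).
move=> r hr; split; apply/setP => x; rewrite in_bigcup_seq.
  rewrite (@eq_in_has _ _ (fun k => (x \in markP r (isa_run D r.-1)) && (blk x.2 == k))); last first.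
    move=> k; rewrite mem_index_iota => /andP [hk _].
    exact: (fin_markP hD hk (HJall k hk) x hr).
  rewrite /isa_prim_at; case: (boolP (x \in markP r (isa_run D r.-1))) => hx /=; last first.
    by apply/esym/negbTE/hasP => -[].
  have /andP [h1 h2] := hb x r (or_introl hx).
  by apply/esym/hasP; exists (blk x.2); rewrite ?mem_index_iota ?h1 ?ltnS ?h2 ?eqxx.
rewrite (@eq_in_has _ _ (fun k => (x \in markC r (isa_run D r.-1)) && (blk x.2 == k))); last first.
  move=> k; rewrite mem_index_iota => /andP [hk _].
  exact: (fin_markC hD hk (HJall k hk) x hr).
rewrite /isa_cob_at; case: (boolP (x \in markC r (isa_run D r.-1))) => hx /=; last first.
  by apply/esym/negbTE/hasP => -[].
have /andP [h1 h2] := hb x r (or_intror hx).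
by apply/esym/hasP; exists (blk x.2); rewrite ?mem_index_iota ?h1 ?ltnS ?h2 ?eqxx.
Qed.
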